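(* Under Assumption A, for $\lambda>0$ let \[ \Phi(x,\lambda)=\int_0^x\sqrt{\Big(\frac{\lambda-q(y)}{p(y)}\Big)_+}\,dy,\qquad K(\lambda)=\exp\Big(-\int_0^\infty\sqrt{\Big(\frac{q(y)-\lambda}{p(y)}\Big)_+}\,dy\Big). \] Then the modified Jost solution satisfies \[ \theta(x,\lambda\pm i0)=K(\lambda)\,e^{\pm i\Phi(x,\lambda)}\big(1+O(\varepsilon(x))\big),\qquad x\to\infty . \]
   Context: Assumption A: $p>0$ absolutely continuous on $\mathbb R_+$, $p'\in L^1(\mathbb R_+)$, $p(x)\to p_0>0$; $q$ real, $q\in L^1(0,x_0)$, absolutely continuous on $[x_0,\infty)$, $q'\in L^1(x_0,\infty)$, $q(x)\to0$ as $x\to\infty$. $(A)_+=(|A|+A)/2$. $\varepsilon(x)=\int_x^\infty(|p'|+|q'|)dy$. Modified Jost solution: for $z\in\mathbb C\setminus\mathbb R$ or $z=\lambda\pm i0$ ($\lambda\ne0$), put $\omega(x,z)=\sqrt{(q(x)-z)/p(x)}$ ($\Re\omega>0$, boundary values on the cut), $a(x,z)=\exp(-\int_0^x\omega(y,z)dy)$; $\theta(x,z)$ is the unique solution of $-(p\theta')'+q\theta=z\theta$ on $\mathbb R_+$ with $\theta(x,z)=a(x,z)(1+O(\varepsilon(x)))$ as $x\to\infty$, obtained as $\theta=au$ where $u$ is the bounded solution of $u(x)=1+\int_x^\infty G(x,y,z)(p\omega)'(y)u(y)dy$, $G(x,y,z)=a(y,z)^2\int_x^yp(s)^{-1}a(s,z)^{-2}ds$.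 *)

(* Defs.v *)
From HB Require Import structures.
From mathcomp Require Import all_boot all_order all_algebra.
From mathcomp Require Import all_classical all_reals all_analysis.
From mathcomp Require Import complex.
Set Implicit Arguments. Unset Strict Implicit. Unset Printing Implicit Defensive.
Import Order.TTheory GRing.Theory Num.Theory.
Import numFieldNormedType.Exports.
Local Open Scope classical_set_scope.
Local Open Scope ring_scope.
Local Open Scope complex_scope.

Section Defs.
Context {R : realType}.
Local Notation mu := (@lebesgue_measure R).

Definition posp (A : R) : R := (`|A| + A) / 2.

Definition cnorm (z : R[i]) : R := Num.sqrt (complex.Re z ^+ 2 + complex.Im z ^+ 2).

Definition cexp (z : R[i]) : R[i] :=
  (expR (complex.Re z))%:C * (cos (complex.Im z) +i* sin (complex.Im z)).

Definition integrable_on (D : set R) (f : R -> R) : Prop :=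
  mu.-integrable D (EFin \o f).

Definition is_omega (p q : R -> R) (x : R) (z c : R[i]) : Prop :=
  c * c = ((q x)%:C - z) / (p x)%:C /\ 0 < complex.Re c.

(* c = omega(x, lam + s i0): the boundary value (limit as eta -> 0+) of
   omega(x, lam + s i eta); s = 1 for lam + i0, s = -1 for lam - i0 *)
Definition is_omega_bv (p q : R -> R) (lam s x : R) (c : R[i]) : Prop :=
  forall e : R, 0 < e -> exists2 d : R, 0 < d &
    forall eta : R, 0 < eta -> eta < d ->
      forall c' : R[i], is_omega p q x (lam +i* (s * eta)) c' ->
        cnorm (c' - c) < e.

(* a(x,z) = exp(- int_0^x omega(y,z) dy), given om(y) = omega(y,z) *)
Definition jost_a (om : R -> R[i]) (x : R) : R[i] :=
  cexp (- ((\int[mu]_(y in `[0, x]) complex.Re (om y)) +i*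
           (\int[mu]_(y in `[0, x]) complex.Im (om y)))).

Definition eps_fun (dp dq : R -> R) (x : R) : R :=
  \int[mu]_(y in `[x, +oo[) (`|dp y| + `|dq y|).

Definition bigO_eps (r : R -> R[i]) (eps : R -> R) : Prop :=
  exists C X : R, forall x, X <= x -> cnorm (r x) <= C * eps x.

(* f : R -> R solves -(p f')' + q f = lam f on R_+ in the standard
   (Caratheodory / quasi-derivative) sense: f and u = p f' are absolutely
   continuous on every [0,x], f' = u / p and u' = (q - lam) f a.e. *)
Definition sl_solution (p q : R -> R) (lam : R) (f : R -> R) : Prop :=
  exists u : R -> R, forall x, 0 <= x ->
    [/\ integrable_on `[0, x] (fun y => u y / p y),
        integrable_on `[0, x] (fun y => (q y - lam) * f y),
        f x = f 0 + \int[mu]_(y in `[0, x]) (u y / p y) &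
        u x = u 0 + \int[mu]_(y in `[0, x]) ((q y - lam) * f y)].

Definition csl_solution (p q : R -> R) (lam : R) (th : R -> R[i]) : Prop :=
  sl_solution p q lam (fun x => complex.Re (th x)) /\
  sl_solution p q lam (fun x => complex.Im (th x)).

Definition assumptionA (p q dp dq : R -> R) (p0 x0 : R) : Prop :=
  [/\ (forall x, 0 <= x -> 0 < p x),
      integrable_on `[0, +oo[ dp &
      (forall x, 0 <= x -> p x = p 0 + \int[mu]_(y in `[0, x]) dp y)] /\
  (0 < p0 /\ p x @[x --> +oo] --> p0) /\
  [/\ 0 <= x0, integrable_on `[0, x0] q,
      integrable_on `[x0, +oo[ dq,
      (forall x, x0 <= x -> q x = q x0 + \int[mu]_(y in `[x0, x]) dq y) &
      q x @[x --> +oo] --> 0].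

Definition Phi (p q : R -> R) (lam x : R) : R :=
  \int[mu]_(y in `[0, x]) Num.sqrt (posp ((lam - q y) / p y)).

Definition Kfun (p q : R -> R) (lam : R) : R :=
  expR (- \int[mu]_(y in `[0, +oo[) Num.sqrt (posp ((q y - lam) / p y))).

Definition modified_jost (p q dp dq : R -> R) (lam s : R)
    (om : R -> R[i]) (th : R -> R[i]) : Prop :=
  csl_solution p q lam th /\
  exists r : R -> R[i],
    (forall x, 0 <= x -> th x = jost_a om x * (1 + r x)) /\
    bigO_eps r (eps_fun dp dq).

End Defs.

(* Main.v *)
Require Import Defs.
From HB Require Import structures.
From mathcomp Require Import all_boot all_order all_algebra.
From mathcomp Require Import all_classical all_reals all_analysis.
From mathcomp Require Import complex.
From mathcomp Require Import ring lra.
Import Order.TTheory GRing.Theory Num.Theory.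
Local Open Scope classical_set_scope.
Local Open Scope ring_scope.
Local Open Scope complex_scope.

Section Aux.
Variable R : realType.

Lemma approx_le0 (y K : R) : 0 <= K ->
  (forall e, 0 < e -> e < 1 -> y <= K * e) -> y <= 0.
Proof.
move=> K0 H; rewrite leNgt; apply/negP => y0.
have K2 : 0 < 2 * K + 2 by lra.
have [lt1|ge1] := ltP (y / (2 * K + 2)) 1.
- have e0 : 0 < y / (2 * K + 2) by apply: divr_gt0.
  have := H _ e0 lt1.
  have He : y / (2 * K + 2) * (2 * K + 2) = y by field; lra.
  move: He e0; set e := y / _ ; nra.
- have := H (1/2) ltac:(lra) ltac:(lra).
  have : y >= 2 * K + 2.
    by move: ge1; rewrite ler_pdivlMr // mul1r.
  lra.
Qed.

Lemma sqrt_ex (X Y : R) : Y != 0 ->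
  exists u v : R, [/\ 0 < u, u * u - v * v = X & u * v + v * u = Y].
Proof.
move=> Y0.
have Y2 : 0 < Y ^+ 2 by rewrite exprn_even_gt0.
set N := Num.sqrt (X ^+ 2 + Y ^+ 2).
have N0 : 0 <= N by apply: sqrtr_ge0.
have NN : N ^+ 2 = X ^+ 2 + Y ^+ 2 by rewrite sqr_sqrtr // addr_ge0 // sqr_ge0.
have NX : 0 < N + X by nra.
exists (Num.sqrt ((N + X) / 2)), (Y / (2 * Num.sqrt ((N + X) / 2))).
have U0 : 0 < Num.sqrt ((N + X) / 2) by rewrite sqrtr_gt0; lra.
have UU : Num.sqrt ((N + X) / 2) ^+ 2 = (N + X) / 2 by rewrite sqr_sqrtr //; lra.
set u := Num.sqrt _ in U0 UU *.
split => //.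
- have -> : u * u - Y / (2 * u) * (Y / (2 * u)) = u ^+ 2 - Y ^+ 2 / (4 * u ^+ 2).
    by field; lra.
  rewrite UU.
  have -> : Y ^+ 2 = (N - X) * (N + X) by nra.
  field; lra.
- field; lra.
Qed.

Lemma sqrt_uniq (w b : R) : 0 <= w -> w * w = b -> Num.sqrt b = w.
Proof. by move=> w0 <-; rewrite -expr2 sqrtr_sqr ger0_norm. Qed.

Lemma final_alg (u v a s : R) : (s = 1 \/ s = -1) -> 0 <= u -> s * v <= 0 ->
  u * u - v * v = a -> u * v = 0 ->
  u = Num.sqrt (posp a) /\ v = - s * Num.sqrt (posp (- a)).
Proof.
move=> hs u0 sv ha huv.
rewrite /posp.
have [a0|a0|a0] := ltgtP a 0.
- have u0' : u = 0.
    move/eqP: huv; rewrite mulf_eq0 => /orP[/eqP //|/eqP v0].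
    rewrite v0 in ha; nra.
  rewrite u0' in ha.
  rewrite ltr0_norm // normrN ltr0_norm //.
  have -> : (- a + a) / 2 = 0 by field.
  rewrite sqrtr0; split => //.
  have -> : (- a + - a) / 2 = v * v by rewrite -ha; field.
  case: hs => hs; subst s; rewrite ?mulN1r ?mul1r.
  + rewrite mul1r in sv.
    by rewrite (@sqrt_uniq (- v)) ?opprK //; [lra | rewrite mulrNN].
  + rewrite mulN1r in sv.
    by rewrite opprK (@sqrt_uniq v) //; lra.
- have v0 : v = 0.
    move/eqP: huv; rewrite mulf_eq0 => /orP[/eqP u0'|/eqP //].
    rewrite u0' in ha; nra.
  rewrite v0 in ha.
  rewrite gtr0_norm // normrN gtr0_norm //.
  have -> : (a + - a) / 2 = 0 by field.
  rewrite sqrtr0 mulr0; split => //.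
  have -> : (a + a) / 2 = u * u by rewrite -ha; field.
  by rewrite (@sqrt_uniq u).
- rewrite a0 in ha *.
  have [u0' v0] : u = 0 /\ v = 0.
    move/eqP: huv; rewrite mulf_eq0 => /orP[/eqP u0'|/eqP v0].
    - by rewrite u0' in ha; split => //; nra.
    - by rewrite v0 in ha; split => //; nra.
  by rewrite u0' v0 normr0 oppr0 !addr0 mul0r sqrtr0 normr0 mul0r sqrtr0 mulr0.
Qed.
Lemma bv_approx (p q : R -> R) (lam s x : R) (c : R[i]) :
  0 < p x -> (s = 1 \/ s = -1) -> is_omega_bv p q lam s x c ->
  forall e, 0 < e -> exists u' v' eta : R,
    [/\ 0 < u', u' * u' - v' * v' = (q x - lam) / p x,
       u' * v' + v' * u' = - (s * eta) * (p x)^-1 &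
     [/\ 0 < eta, eta < e,
       `|u' - complex.Re c| < e & `|v' - complex.Im c| < e]].
Proof.
move=> P0 hs hbv e e0.
have [d d0 hd] := hbv e e0.
set eta := Num.min d e / 2.
have eta0 : 0 < eta by rewrite /eta divr_gt0 // lt_min d0 e0.
have etad : eta < d.
  have : Num.min d e <= d by rewrite ge_min lexx.
  rewrite /eta; lra.
have etae : eta < e.
  have : Num.min d e <= e by rewrite ge_min lexx orbT.
  rewrite /eta; lra.
have Y0 : - (s * eta) * (p x)^-1 != 0.
  have s0 : s != 0 by case: hs => ->; rewrite ?oppr_eq0 oner_eq0.
  apply: mulf_neq0; first (rewrite oppr_eq0; apply: mulf_neq0 => //; exact: lt0r_neq0).
  rewrite invr_eq0; exact: lt0r_neq0.
have [u' [v' [u0 ha hb]]] := sqrt_ex ((q x - lam) / p x) _ Y0.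
exists u', v', eta; split => //.
have : is_omega p q x (lam +i* (s * eta)) (u' +i* v').
  split => //.
  rewrite -rmorphV ?unitfE; last by lra.
  apply/eqP; rewrite eq_complex /=; apply/andP; split; apply/eqP.
  - by rewrite ha mulr0 subr0.
  - by rewrite hb mulr0 add0r sub0r.
move/(hd eta eta0 etad).
case: c {hd hbv} => u v /=; rewrite /cnorm /= => H.
have nle : forall w z : R, `|w| <= Num.sqrt (w ^+ 2 + z ^+ 2).
  move=> w z; rewrite -sqrtr_sqr ler_sqrt; last by rewrite addr_ge0 // sqr_ge0.
  by rewrite lerDl sqr_ge0.
split => //.
- by apply: le_lt_trans H; apply: nle.
- by apply: le_lt_trans H; rewrite [X in Num.sqrt X]addrC; exact: nle.
Qed.
Lemma approx_eq0 (y K : R) : 0 <= K ->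
  (forall e, 0 < e -> e < 1 -> y <= K * e /\ - y <= K * e) -> y = 0.
Proof.
move=> K0 H; apply/eqP; rewrite eq_le; apply/andP; split.
- by apply: (@approx_le0 _ K K0) => e e0 e1; case: (H e e0 e1).
- by rewrite -oppr_le0; apply: (@approx_le0 _ K K0) => e e0 e1; case: (H e e0 e1).
Qed.

Lemma omega_val (p q : R -> R) (lam s x : R) (c : R[i]) :
  0 < p x -> (s = 1 \/ s = -1) -> is_omega_bv p q lam s x c ->
  complex.Re c = Num.sqrt (posp ((q x - lam) / p x)) /\
  complex.Im c = - s * Num.sqrt (posp ((lam - q x) / p x)).
Proof.
move=> P0 hs hbv.
have HA := @bv_approx p q lam s x c P0 hs hbv.
case: c HA {hbv} => u v /= HA.
have iP : 0 < (p x)^-1 by rewrite invr_gt0.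
move: HA iP; set a := (q x - lam) / p x; set iv := (p x)^-1 => HA iP.
have -> : (lam - q x) / p x = - a by rewrite /a -mulNr opprB.
have nu1 : 0 <= `|u| by [].
have nu2 : u <= `|u| by apply: ler_norm.
have nu3 : - u <= `|u| by rewrite -normrN; apply: ler_norm.
have nv1 : 0 <= `|v| by [].
have nv2 : v <= `|v| by apply: ler_norm.
have nv3 : - v <= `|v| by rewrite -normrN; apply: ler_norm.
apply: final_alg => //.
- rewrite -oppr_le0; apply: (@approx_le0 _ 1) => // e e0 e1.
  have [u' [v' [eta [u0 _ _ [_ _ hu _]]]]] := HA e e0.
  move: hu; rewrite ltr_norml; lra.
- apply: (@approx_le0 _ 1) => // e e0 e1.
  have [u' [v' [eta [u0 _ hb [eta0 _ _ hv]]]]] := HA e e0.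
  move: hv; rewrite ltr_norml => hv.
  have ee : 0 < eta * iv by rewrite mulr_gt0.
  case: hs hb => -> hb; nra.
- apply/eqP; rewrite -subr_eq0; apply/eqP.
  apply: (@approx_eq0 _ (2 * `|u| + 2 * `|v| + 2)); first lra.
  move=> e e0 e1.
  have [u' [v' [eta [u0 ha _ [_ _ hu hv]]]]] := HA e e0.
  move: hu hv; rewrite !ltr_norml => hu hv.
  rewrite -ha; split; nra.
- apply: (@approx_eq0 _ (`|u| + `|v| + 1 + iv)); first lra.
  move=> e e0 e1.
  have [u' [v' [eta [u0 _ hb [eta0 etae hu hv]]]]] := HA e e0.
  move: hu hv; rewrite !ltr_norml => hu hv.
  have ee : eta * iv <= e * iv by rewrite ler_pM2r // ltW.
  case: hs hb => -> hb; split; nra.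
Qed.
Local Notation mu := (@lebesgue_measure R).

Lemma int_cut (f : R -> R) (x X : R) : X <= x -> (forall y, X <= y -> f y = 0) ->
  \int[mu]_(y in `[0, x]) f y = \int[mu]_(y in `[0, +oo[) f y.
Proof.
move=> Xx hf.
rewrite Rintegral_mkcond [RHS]Rintegral_mkcond; congr Rintegral; apply/funext => y.
rewrite !patchE.
case: ifPn => [/set_mem|/negP h1]; case: ifPn => [/set_mem|/negP h2] //=; rewrite ?in_itv /= ?andbT.
- case/andP => y0 _; exfalso; apply: h2; apply/mem_set; by rewrite /= in_itv /= andbT.
- move=> y0; have [yx|xy] := leP y x.
  + by exfalso; apply: h1; apply/mem_set; rewrite /= in_itv /= y0 yx.
  + by rewrite hf //; apply: le_trans Xx (ltW xy).
Qed.

Lemma eventually_lt (q : R -> R) (lam : R) : q x @[x --> +oo] --> 0 -> 0 < lam ->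
  exists X, forall y, X < y -> q y < lam.
Proof. move=> hq l0; have := cvgr_lt _ hq _ l0; case/(_ _) => M [Mr HM]; by exists M. Qed.

Lemma RintegralN0 (D : set R) (g : R -> R) : (forall y, D y -> 0 <= g y) ->
  \int[mu]_(y in D) (- g y) = - \int[mu]_(y in D) g y.
Proof.
move=> g0; rewrite /Rintegral -fineN; congr fine.
under eq_integral do rewrite EFinN.
by apply: integral_ge0N => y /g0; rewrite lee_fin.
Qed.

Lemma cexp_neq0 (z : R[i]) : cexp z != 0.
Proof.
rewrite /cexp; apply: mulf_neq0.
- rewrite eq_complex /= negb_and; apply/orP; left; apply: lt0r_neq0; exact: expR_gt0.
- rewrite eq_complex /=; apply/negP => /andP [/eqP c0 /eqP s0].
  have := cos2Dsin2 (complex.Im z); rewrite c0 s0 expr0n /= addr0 => /eqP.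
  by rewrite eq_sym oner_eq0.
Qed.
End Aux.
Arguments omega_val {R p q lam s x c}.
Arguments int_cut {R f x X}.

Theorem corollary2p9 (R : realType) (p q dp dq : R -> R) (p0 x0 : R)
  (hA : assumptionA p q dp dq p0 x0)
  (lam : R) (hlam : 0 < lam) (s : R) (hs : s = 1 \/ s = -1)
  (om : R -> R[i]) (hom : forall x, 0 <= x -> is_omega_bv p q lam s x (om x))
  (th : R -> R[i]) (hth : modified_jost p q dp dq lam s om th) :
  exists r : R -> R[i],
    (forall x, 0 <= x ->
       th x = (Kfun p q lam)%:C * cexp (0 +i* (s * Phi p q lam x)) * (1 + r x)) /\
    bigO_eps r (eps_fun dp dq).
Proof.
case: hA => [[ppos _ _] [_ [_ _ _ _ hq]]].
have [X1 HX1] := @eventually_lt R q lam hq hlam.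
set X := Num.max X1 0.
have X0 : 0 <= X by rewrite le_max lexx orbT.
set D := fun x => (Kfun p q lam)%:C * cexp (0 +i* (s * Phi p q lam x)).
have D0 : forall x, D x != 0.
  move=> x; apply: mulf_neq0; last exact: cexp_neq0.
  rewrite eq_complex /= negb_and; apply/orP; left; apply: lt0r_neq0; exact: expR_gt0.
have f0 : forall y, X < y ->
    Num.sqrt (posp ((q y - lam) / p y)) = 0.
  move=> y Xy.
  have y0 : 0 <= y by lra.
  have qy : q y < lam by apply: HX1; move: Xy; rewrite gt_max => /andP[].
  have neg : (q y - lam) / p y < 0 by rewrite pmulr_llt0 ?invr_gt0 ?ppos //; lra.
  by rewrite /posp ltr0_norm // addNr mul0r sqrtr0.
have key : forall x, X < x -> jost_a om x = D x.
  move=> x Xx.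
  have hRe : \int[@lebesgue_measure R]_(y in `[0, x]) complex.Re (om y) =
      \int[@lebesgue_measure R]_(y in `[0, x]) Num.sqrt (posp ((q y - lam) / p y)).
    apply: eq_Rintegral => y /set_mem /=; rewrite in_itv /= => /andP [y0 _].
    exact: (omega_val (ppos y y0) hs (hom y y0)).1.
  have hIm : \int[@lebesgue_measure R]_(y in `[0, x]) complex.Im (om y) = - s * Phi p q lam x.
    have -> : \int[@lebesgue_measure R]_(y in `[0, x]) complex.Im (om y) =
       \int[@lebesgue_measure R]_(y in `[0, x]) (- s * Num.sqrt (posp ((lam - q y) / p y))).
      apply: eq_Rintegral => y /set_mem /=; rewrite in_itv /= => /andP [y0 _].
      exact: (omega_val (ppos y y0) hs (hom y y0)).2.
    rewrite /Phi; case: hs => ->.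
    - under eq_Rintegral do rewrite mulN1r.
      by rewrite RintegralN0 ?mulN1r // => y _; apply: sqrtr_ge0.
    - by under eq_Rintegral do rewrite opprK mul1r; rewrite opprK mul1r.
  have hK : \int[@lebesgue_measure R]_(y in `[0, x]) Num.sqrt (posp ((q y - lam) / p y)) =
      \int[@lebesgue_measure R]_(y in `[0, +oo[) Num.sqrt (posp ((q y - lam) / p y)).
    apply: (int_cut (lexx x)) => y xy; apply: f0; lra.
  rewrite /jost_a /D /Kfun /cexp hRe hIm -hK /=.
  by rewrite expR0 rmorph1 mul1r mulNr opprK.
case: hth => _ [r0 [hr0 [C [X0' hC]]]].
exists (fun x => th x / D x - 1); split.
- move=> x _; rewrite -/(D x) addrC subrK mulrC divfK //.
- exists C, (Num.max (X + 1) X0') => x; rewrite ge_max => /andP [xX xX0].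
  have xp : 0 <= x by lra.
  rewrite hr0 // key; last by lra.
  by rewrite mulrC mulKf // addrC addKr; apply: hC.
Qed.
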